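(* Let $s,t\ge 1$ be integers and let $H$ be a bipartite graph containing a subgraph $K$ isomorphic to the complete bipartite graph $K_{s,t}$, such that every vertex $v \in V(H)$ is at distance at most one from $V(K)$. Then the maximum number of copies of $H$ in a triangle-free $n$-vertex graph is asymptotically attained by a complete bipartite graph; that is, \[ \mathrm{ex}(n,H,K_3) = \max_{0\le m\le n} H(K_{m,n-m}) + o(n^{v(H)}) \quad (n\to\infty). \]
   Context: For graphs $H$ and $F$, $\mathrm{ex}(n,H,F)$ denotes the maximum number of (not necessarily induced) copies of $H$ in an $n$-vertex graph that does not contain $F$ as a subgraph; in particular $\mathrm{ex}(n,H,K_3)$ is the maximum number of copies of $H$ in a triangle-free $n$-vertex graph. $H(G)$ denotes the number of (not necessarily induced, unlabelled) copies of $H$ in $G$, $v(H)$ is the number of vertices of $H$, and $K_{m,n-m}$ is the complete bipartite graph with parts of sizes $m$ and $n-m$. The distance from a vertex $v$ to a vertex set $U$ is the minimum graph distance from $v$ to a vertex of $U$ (zero if $v\in U$). *)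

(* Defs.v *)
From mathcomp Require Import all_boot all_order all_algebra.
Set Implicit Arguments. Unset Strict Implicit. Unset Printing Implicit Defensive.

Definition is_graph (n : nat) (e : rel 'I_n) : Prop :=
  symmetric e /\ irreflexive e.

Definition inj_homb (h n : nat) (H : rel 'I_h) (G : rel 'I_n)
  (f : {ffun 'I_h -> 'I_n}) : bool :=
  injectiveb f && [forall x, forall y, H x y ==> G (f x) (f y)].

(* H(G): number of (unlabelled, not necessarily induced) copies of H in G,
   i.e. the number of distinct subgraphs (vertex set, edge set) of G that are
   images of H under an injective homomorphism (= subgraphs isomorphic to H).
   Edges are stored as ordered pairs (both orientations). *)
Definition copies (h n : nat) (H : rel 'I_h) (G : rel 'I_n) : nat :=
  #| [set ((f : {ffun 'I_h -> 'I_n}) @: setT, [set ((f : {ffun 'I_h -> 'I_n}) p.1, f p.2) | p in [set p : 'I_h * 'I_h | H p.1 p.2]])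
      | f in [pred f : {ffun 'I_h -> 'I_n} | inj_homb H G f]] |.

Definition graph_of (n : nat) (g : {ffun 'I_n * 'I_n -> bool}) : rel 'I_n :=
  fun x y => g (x, y).

Definition is_graphb (n : nat) (g : {ffun 'I_n * 'I_n -> bool}) : bool :=
  [forall x, forall y, g (x, y) == g (y, x)] && [forall x, ~~ g (x, x)].

Definition triangle_freeb (n : nat) (G : rel 'I_n) : bool :=
  ~~ [exists x, exists y, exists z, [&& G x y, G y z & G z x]].

Definition ex_K3 (h : nat) (H : rel 'I_h) (n : nat) : nat :=
  \max_(g : {ffun 'I_n * 'I_n -> bool} | is_graphb g && triangle_freeb (graph_of g))
     copies H (graph_of g).

Definition Kbip (n m : nat) : rel 'I_n := fun x y => (x < m) != (y < m).

Definition max_bip (h : nat) (H : rel 'I_h) (n : nat) : nat :=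
  \max_(m < n.+1) copies H (@Kbip n m).

Definition bipartite (h : nat) (H : rel 'I_h) : Prop :=
  exists c : 'I_h -> bool, forall x y, H x y -> c x != c y.

Definition dist_le1 (h : nat) (H : rel 'I_h) (U : {set 'I_h}) (v : 'I_h) : Prop :=
  v \in U \/ exists2 u, u \in U & H v u.

(* Main.v *)
Require Import Defs.
From mathcomp Require Import all_boot all_order all_algebra.
From mathcomp Require Import zify ring lra.
From Stdlib Require Import FunctionalExtensionality.
Import Order.TTheory GRing.Theory Num.Theory.
Set Implicit Arguments. Unset Strict Implicit. Unset Printing Implicit Defensive.

Definition homb (h n : nat) (H : rel 'I_h) (G : rel 'I_n) (f : {ffun 'I_h -> 'I_n}) : bool :=
  [forall x, forall y, H x y ==> G (f x) (f y)].

Section NonInj.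
Variables (h n : nat) (H : rel 'I_h) (G : rel 'I_n).

Lemma card_eq_pair (u v : 'I_h) : u != v ->
  #|[set f : {ffun 'I_h -> 'I_n} | f u == f v]| <= n ^ h.-1.
Proof.
move=> uv.
have vu : v != u by rewrite eq_sym.
pose F (f : {ffun 'I_h -> 'I_n}) : {ffun {k : 'I_h | k != u} -> 'I_n} := [ffun k => f (val k)].
rewrite -(card_in_imset (f := F)); last first.
  move=> f1 f2; rewrite !inE => /eqP e1 /eqP e2 eF; apply/ffunP => k.
  have E k' (kk : k' != u) : f1 k' = f2 k'.
    by have := congr1 (fun g : {ffun {k : 'I_h | k != u} -> 'I_n} => g (exist _ k' kk)) eF; rewrite !ffunE.
  case: (eqVneq k u) => [->|ku]; last exact: E.
  by rewrite e1 e2; apply: E.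
apply: (leq_trans (max_card _)).
by rewrite card_ffun card_ord card_sig cardC1 card_ord.
Qed.

Lemma sum_bool_card (T : finType) (b : pred T) : \sum_(x : T) (b x : nat) = #|[set x | b x]|.
Proof.
rewrite -sum1_card [RHS]big_mkcond /=; apply: eq_bigr => x _; rewrite inE; by case: (b x).
Qed.

Lemma noninj : #|[set f | homb H G f]| <= #|[set f | inj_homb H G f]| + h * h * n ^ h.-1.
Proof.
have sub: [set f | homb H G f] \subset [set f | inj_homb H G f] :|: [set f : {ffun 'I_h -> 'I_n} | ~~ injectiveb f].
  apply/subsetP => f; rewrite !inE /inj_homb => hf; rewrite /homb in hf; rewrite hf; by case: injectiveb.
apply: leq_trans (subset_leq_card sub) _; apply: leq_trans (leq_card_setU _ _) _.
rewrite leq_add2l.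
set A := [set f : {ffun 'I_h -> 'I_n} | ~~ injectiveb f].
have : #|A| <= \sum_(f : {ffun 'I_h -> 'I_n}) \sum_(p : 'I_h * 'I_h) ((p.1 != p.2) && (f p.1 == f p.2) : nat).
  rewrite -sum1_card [X in _ <= X](bigID (mem A)) /=; apply: leq_trans (leq_addr _ _) .
  apply: leq_sum => f; rewrite inE => nf.
  have: ~~ [forall p : 'I_h * 'I_h, (p.1 != p.2) ==> (f p.1 != f p.2)].
    apply: contra nf => /forallP Hp; apply/injectiveP => x y exy; apply/eqP.
    apply: contraTT (Hp (x,y)) => /= xy; by rewrite xy exy eqxx.
  rewrite negb_forall => /existsP [p]; rewrite negb_imply negbK => /andP [p12 fp].
  by rewrite (bigD1 p) //= p12 fp.
move/leq_trans; apply; rewrite exchange_big /=.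
apply: (@leq_trans (\sum_(p : 'I_h * 'I_h) n ^ h.-1)); last first.
  by rewrite sum_nat_const card_prod !card_ord.
apply: leq_sum => p _; case: (eqVneq p.1 p.2) => [e|ne].
  by rewrite big1 // => f _; rewrite e eqxx.
rewrite sum_bool_card; apply: leq_trans (card_eq_pair ne).
by apply: eq_leq; apply: eq_card => f; rewrite !inE.
Qed.
End NonInj.

Section Aut.
Variables (h n : nat) (H : rel 'I_h) (G : rel 'I_n).

Definition Eset := [set p : 'I_h * 'I_h | H p.1 p.2].
Definition Eimg m (f : {ffun 'I_h -> 'I_m}) := [set (f p.1, f p.2) | p in Eset].
Definition key (f : {ffun 'I_h -> 'I_n}) := (f @: setT, Eimg f).
Definition Aut := [set s : {ffun 'I_h -> 'I_h} | inj_homb H H s && (Eimg s == Eset)].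

Lemma imsetT_inj (T : finType) (s : T -> T) : injective s -> s @: setT = setT.
Proof.
move=> si; apply/eqP; rewrite eqEcard subsetT /= card_imset //.
Qed.

Lemma fiber_card (f0 : {ffun 'I_h -> 'I_n}) : inj_homb H G f0 ->
  #|[set f | inj_homb H G f && (key f == key f0)]| = #|Aut|.
Proof.
move=> /andP [/injectiveP inj0 /forallP hom0].
pose comp (s : {ffun 'I_h -> 'I_h}) : {ffun 'I_h -> 'I_n} := [ffun x => f0 (s x)].
have -> : [set f | inj_homb H G f && (key f == key f0)] = comp @: Aut.
  apply/setP => f; rewrite inE; apply/idP/imsetP.
  - move=> /andP [/andP [/injectiveP injf /forallP homf] /eqP [eV eE]].
    pose s : {ffun 'I_h -> 'I_h} := [ffun x => odflt x [pick y | f0 y == f x]].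
    have sE x : f0 (s x) = f x.
      rewrite ffunE; case: pickP => [y /eqP //| none].
      have : f x \in f0 @: setT by rewrite -eV; apply: imset_f; rewrite inE.
      by case/imsetP => y _ e; have := none y; rewrite e eqxx.
    have sinj : injective s by move=> x y e; apply: injf; rewrite -!sE e.
    have shom x y : H x y -> H (s x) (s y).
      move=> hxy; have : (f x, f y) \in Eimg f0.
        by rewrite -eE; apply/imsetP; exists (x, y); rewrite ?inE.
      case/imsetP => p; rewrite inE => hp [e1 e2].
      by rewrite (inj0 _ _ (etrans (sE x) e1)) (inj0 _ _ (etrans (sE y) e2)).
    exists s.
      rewrite inE; apply/andP; split.
        apply/andP; split; first by apply/injectiveP.
        by apply/forallP => x; apply/forallP => y; apply/implyP; apply: shom.
      rewrite eqEcard; apply/andP; split.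
        apply/subsetP => q /imsetP [p]; rewrite !inE => hp ->; exact: shom.
      rewrite card_in_imset // => p1 p2 _ _ [e1 e2].
      by case: p1 p2 e1 e2 => [? ?] [? ?] /= /sinj -> /sinj ->.
    by apply/ffunP => x; rewrite ffunE sE.
  - case=> s; rewrite inE => /andP [/andP [/injectiveP sinj /forallP shom] /eqP sE] ->.
    apply/andP; split.
      apply/andP; split.
        by apply/injectiveP => x y; rewrite !ffunE => /inj0 /sinj.
      apply/forallP => x; apply/forallP => y; apply/implyP => hxy; rewrite !ffunE.
      have := forallP (hom0 (s x)) (s y); rewrite (implyP (forallP (shom x) y) hxy) //.
    apply/eqP; congr pair.
      rewrite -[in RHS](imsetT_inj sinj) -imset_comp; apply: eq_imset => x.
      by rewrite /= ffunE.
    rewrite /Eimg -[in RHS]sE /Eimg -imset_comp; apply: eq_imset => p.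
    by rewrite /= !ffunE.
rewrite card_in_imset // => s1 s2 _ _ e; apply/ffunP => x; apply: inj0.
by have := congr1 (fun g : {ffun 'I_h -> 'I_n} => g x) e; rewrite !ffunE.
Qed.

Lemma copies_aut : copies H G * #|Aut| = #|[set f | inj_homb H G f]|.
Proof.
rewrite -[RHS]sum1_card (partition_big_imset key) /= /copies.
have -> : [set key f | f in [pred f | inj_homb H G f]] = key @: [set f | inj_homb H G f].
  by apply/setP => c; apply/imsetP/imsetP => [][f fA ->]; exists f; rewrite ?inE in fA *.
rewrite -sum_nat_const; apply: eq_bigr => c /imsetP [f0]; rewrite inE => if0 ->.
rewrite -(fiber_card if0) -sum1_card; apply: eq_bigl => f; rewrite !inE.
done.
Qed.
End Aut.



Lemma card_family_prod (aT rT : finType) (F : aT -> pred rT) :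
  #|[set f : {ffun aT -> rT} | [forall x, f x \in F x]]| = \prod_x #|F x|.
Proof.
have := card_family F; rewrite foldrE big_map big_enum /= => <-.
by apply: eq_card => f; rewrite inE; apply/forallP/familyP.
Qed.

Lemma card_lt (n m : nat) : m <= n -> #|[set y : 'I_n | y < m]| = m.
Proof.
move=> le; have inj : injective (@widen_ord m n le).
  by move=> a b e; apply: val_inj; exact: (congr1 val e).
transitivity #|(@widen_ord m n le) @: [set: 'I_m]|; last by rewrite card_imset // cardsT card_ord.
apply: eq_card => y; rewrite inE; apply/idP/imsetP.
  by move=> ym; exists (Ordinal ym) => //; apply: val_inj.
by case=> z _ ->; rewrite /= ltn_ord.
Qed.

Lemma card_ge (n m : nat) : m <= n -> #|[set y : 'I_n | ~~ (y < m)]| = n - m.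
Proof.
move=> le; have := cardsC [set y : 'I_n | y < m]; rewrite card_lt // card_ord => E.
rewrite -[n in n - m]E addKn; apply: eq_card => y; by rewrite !inE.
Qed.

Section Lower.
Variables (h n m : nat) (H : rel 'I_h).
Hypothesis mn : m <= n.

Lemma cnt_col (P : pred 'I_h) :
  #|[set f : {ffun 'I_h -> 'I_n} | [forall v, (f v < m) == P v]]| =
    m ^ #|[set v | P v]| * (n - m) ^ #|[set v | ~~ P v]|.
Proof.
rewrite (eq_card (B := [set f : {ffun 'I_h -> 'I_n} |
   [forall x, f x \in (fun v => if P v then [pred y : 'I_n | y < m] else [pred y : 'I_n | ~~ (y < m)]) x]])); last first.
  move=> f; rewrite !inE; apply: eq_forallb => v; case: (P v); rewrite inE;
  by case: (f v < m).
rewrite card_family_prod (bigID P) /=.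
rewrite (eq_bigr (fun _ => m)); last first.
  by move=> v ->; rewrite -[RHS](card_lt mn); apply: eq_card => y; rewrite !inE.
rewrite [X in _ * X = _](eq_bigr (fun _ => n - m)); last first.
  by move=> v /negbTE ->; rewrite -[RHS](card_ge mn); apply: eq_card => y; rewrite !inE.
rewrite -!prod_nat_const; congr (_ * _); apply: eq_bigl => v; by rewrite inE.
Qed.

Lemma hom_bip_lower (c : 'I_h -> bool) (g : bool) :
  (forall x y, H x y -> c x != c y) -> 0 < h ->
  m ^ #|[set v | c v == g]| * (n - m) ^ #|[set v | c v != g]|
  + m ^ #|[set v | c v != g]| * (n - m) ^ #|[set v | c v == g]|
  <= #|[set f | homb H (@Kbip n m) f]|.
Proof.
move=> Hc h0.
have e2 : #|[set v | ~~ (c v != g)]| = #|[set v | c v == g]|.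
  by apply: eq_card => v; rewrite !inE negbK.
rewrite -(cnt_col (fun v => c v == g)) -e2 -(cnt_col (fun v => c v != g)).
set S1 := [set f : {ffun 'I_h -> 'I_n} | _].
set S2 := [set f : {ffun 'I_h -> 'I_n} | _].
have dis : S1 :&: S2 = set0.
  apply/setP => f; rewrite !inE.
  apply/negP => /andP [/forallP /(_ (Ordinal h0)) /eqP e1 /forallP /(_ (Ordinal h0)) /eqP].
  by rewrite e1; case: (c _ == g).
rewrite -cardsUI dis cards0 addn0; apply: subset_leq_card; apply/subsetP => f.
have key (P : pred 'I_h) : (forall x y, H x y -> P x != P y) ->
    [forall v, (f v < m) == P v] -> homb H (@Kbip n m) f.
  move=> HP /forallP Pf; apply/forallP => x; apply/forallP => y; apply/implyP => hxy.
  by rewrite /Kbip (eqP (Pf x)) (eqP (Pf y)); apply: HP.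
have b1 (a b d : bool) : a != b -> (a == d) != (b == d) by case: a; case: b; case: d.
have b2 (a b d : bool) : a != b -> (a != d) != (b != d) by case: a; case: b; case: d.
rewrite !inE => /orP [] Hf; apply: (key _ _ Hf) => x y /Hc; [exact: b1 | exact: b2].
Qed.
End Lower.

Lemma mono1 x y z q : x <= z -> 0 < q -> x ^ q * (z + y) <= z ^ q * (x + y).
Proof.
case: q => // q xz _; rewrite !expnS.
have e : x ^ q <= z ^ q by case: (q) => [|r]; rewrite ?expn0 // leq_exp2r.
rewrite !mulnDr; apply: leq_add; last by apply: leq_mul => //; apply: leq_mul.
rewrite [z * _ * x]mulnC mulnA [x * _ * z]mulnC mulnA [z * x]mulnC; exact: leq_mul.
Qed.

Lemma key_nat x y z p q : x <= z -> 0 < p -> 0 < q ->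
  (x ^ q * y ^ p + x ^ p * y ^ q) * (z + y) <= (z ^ q * y ^ p + z ^ p * y ^ q) * (x + y).
Proof.
move=> xz p0 q0; rewrite !mulnDl; apply: leq_add.
  by rewrite mulnAC [z ^ q * _ * _]mulnAC; apply: leq_mul => //; apply: mono1.
by rewrite mulnAC [z ^ p * _ * _]mulnAC; apply: leq_mul => //; apply: mono1.
Qed.

Definition deg n (G : rel 'I_n) (a : 'I_n) := #|[set u | G a u]|.
Definition gbip n p q m := m ^ p * (n - m) ^ q + m ^ q * (n - m) ^ p.

Section Deg.
Variables (n : nat) (G : rel 'I_n).
Hypothesis Gsym : symmetric G.
Hypothesis Gtf : forall a b u, G a b -> G b u -> G u a -> False.

Lemma deg_sum a b : G a b -> deg G a + deg G b <= n.
Proof.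
move=> gab; rewrite /deg -cardsUI.
have -> : [set u | G a u] :&: [set u | G b u] = set0.
  apply/setP => u; rewrite !inE; apply/negP => /andP [gau gbu].
  by apply: (Gtf gab gbu); rewrite Gsym.
by rewrite cards0 addn0 -[X in _ <= X](card_ord n) max_card.
Qed.

Lemma deg_pos a b : G a b -> 0 < deg G a.
Proof. by move=> gab; rewrite /deg card_gt0; apply/set0Pn; exists b; rewrite inE. Qed.

Lemma deg_sym b : #|[set a | G a b]| = deg G b.
Proof. by apply: eq_card => a; rewrite !inE Gsym. Qed.

Lemma edge_sum p q : 0 < p -> 0 < q ->
  \sum_a \sum_(b | G a b) deg G a ^ q.-1 * deg G b ^ p.-1 <= \max_(m < n.+1) gbip n p q m.
Proof.
move=> p0 q0.
set Gs := \max_(m < n.+1) gbip n p q m.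
case: (posnP n) => [n0|npos].
  by rewrite big1 // => a; exfalso; case: a; rewrite n0.
have edge a b : G a b -> (((deg G a ^ q.-1 * deg G b ^ p.-1 + deg G a ^ p.-1 * deg G b ^ q.-1)%:R : rat)
   <= Gs%:R / n%:R * ((deg G a)%:R^-1 + (deg G b)%:R^-1))%R.
  move=> gab; have x0 := deg_pos gab; have y0 : 0 < deg G b by apply: (deg_pos (b := a)); rewrite Gsym.
  have xy := deg_sum gab.
  move: x0 y0 xy; set x := deg G a; set y := deg G b => x0 y0 xy.
  have key : (x ^ q * y ^ p + x ^ p * y ^ q) * n <= Gs * (x + y).
    have xz : x <= n - y by lia.
    have := key_nat y xz p0 q0; rewrite subnK; last by lia.
    move/leq_trans; apply; apply: leq_mul => //.
    have yn : y < n.+1 by lia.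
    apply: leq_trans (leq_bigmax (Ordinal yn)); rewrite /gbip /= addnC.
    by rewrite [y ^ q * _]mulnC [y ^ p * _]mulnC addnC.
  have E (z k : nat) : 0 < k -> z ^ k = z * z ^ k.-1 by move=> k0; rewrite -expnS prednK.
  rewrite !(E _ _ p0) !(E _ _ q0) in key.
  have -> : (Gs%:R / n%:R * (x%:R^-1 + y%:R^-1) : rat)%R = ((Gs * (x + y))%:R / (n * x * y)%:R)%R.
    rewrite !natrM natrD; field.
    by rewrite !pnatr_eq0 -!lt0n x0 y0 npos.
  rewrite ler_pdivlMr ?ltr0n ?muln_gt0 ?x0 ?y0 ?npos // -natrM ler_nat.
  apply: leq_trans key; apply: eq_leq; ring.
have swap (g : 'I_n -> 'I_n -> nat) :
    \sum_a \sum_(b | G a b) g a b = \sum_a \sum_(b | G a b) g b a.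
  rewrite (exchange_big_dep predT) //=; apply: eq_bigr => a _; apply: eq_bigl => b.
  by rewrite Gsym.
have inv1 (z : nat) : ((z%:R * z%:R^-1 : rat) <= 1)%R.
  case: (posnP z) => [->|z0]; first by rewrite mul0r.
  by rewrite mulfV // pnatr_eq0 -lt0n.
have cnt (a : 'I_n) : \sum_(b | G a b) 1 = deg G a.
  by rewrite sum1_card; apply: eq_card => b; rewrite !inE.
have half : ((\sum_a \sum_(b | G a b) ((deg G a)%:R^-1 + (deg G b)%:R^-1) : rat) <= n%:R *+ 2)%R.
  rewrite mulr2n; under eq_bigr do rewrite big_split /=; rewrite big_split /=.
  have Hn : (\sum_(a : 'I_n) 1%R = n%:R :> rat)%R by rewrite sumr_const card_ord.
  rewrite -Hn; apply: lerD.
    apply: ler_sum => a _; rewrite sumr_const.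
    rewrite (_ : #|_| = deg G a); last by apply: eq_card => b; rewrite !inE.
    by rewrite -[X in (X <= _)%R]mulr_natl; apply: inv1.
  rewrite (exchange_big_dep predT) //=.
  apply: ler_sum => b _; rewrite sumr_const.
  rewrite (_ : #|_| = deg G b); last by rewrite -deg_sym; apply: eq_card => a; rewrite !inE.
  by rewrite -[X in (X <= _)%R]mulr_natl; apply: inv1.
have : ((\sum_a \sum_(b | G a b) deg G a ^ q.-1 * deg G b ^ p.-1) *2 <= Gs * 2)%N.
  rewrite -(@ler_nat rat) muln2 -addnn [X in (_ + X)%N]swap -big_split /=.
  under eq_bigr do rewrite -big_split /=.
  rewrite natr_sum.
  apply: (@le_trans _ _ (\sum_a \sum_(b | G a b) (Gs%:R / n%:R * ((deg G a)%:R^-1 + (deg G b)%:R^-1)) : rat)%R).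
    apply: ler_sum => a _; rewrite natr_sum; apply: ler_sum => b gab.
    by rewrite [(deg G b ^ q.-1 * _)%N]mulnC; apply: edge.
  under eq_bigr => a _ do rewrite -mulr_sumr.
  rewrite -mulr_sumr; apply: le_trans (ler_wpM2l _ half) _.
    by rewrite divr_ge0 ?ler0n.
  rewrite le_eqVlt; apply/orP; left; apply/eqP.
  rewrite natrM -mulr_natr; field; by rewrite pnatr_eq0 -lt0n.
by rewrite leq_mul2r.
Qed.
End Deg.










Section Upper.
Variables (h n s t : nat) (H : rel 'I_h) (G : rel 'I_n) (f : {ffun 'I_(s+t) -> 'I_h})
  (anc : 'I_h -> 'I_(s+t)).
Hypothesis Gsym : symmetric G.
Hypothesis fK : forall i j, Kbip s i j -> H (f i) (f j).
Hypothesis ancK : forall k, anc (f k) = k.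
Hypothesis ancH : forall v, v \notin f @: setT -> H v (f (anc v)).

Definition Khom (psi : {ffun 'I_(s+t) -> 'I_n}) :=
  [forall i, forall j, Kbip s i j ==> G (psi i) (psi j)].

Lemma hom_ext :
  #|[set phi | homb H G phi]| <=
  \sum_(psi | Khom psi) \prod_(v | v \notin f @: setT) deg G (psi (anc v)).
Proof.
pose res (phi : {ffun 'I_h -> 'I_n}) : {ffun 'I_(s+t) -> 'I_n} := [ffun k => phi (f k)].
rewrite -sum1_card (partition_big res Khom) /=; last first.
  move=> phi; rewrite inE => /forallP hp; apply/forallP => i; apply/forallP => j.
  apply/implyP => kij; rewrite !ffunE; exact: (implyP (forallP (hp (f i)) (f j)) (fK kij)).
apply: leq_sum => psi Kpsi.
pose F v := if v \in f @: setT then pred1 (psi (anc v)) else [pred y | G (psi (anc v)) y].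
rewrite sum1dep_card.
apply: leq_trans (_ : _ <= #|[set phi : {ffun 'I_h -> 'I_n} | [forall x, phi x \in F x]]|) _.
  apply: subset_leq_card; apply/subsetP => phi; rewrite !inE => /andP [/forallP hp /eqP rp].
  apply/forallP => v; rewrite /F; case: ifP => vf.
    case/imsetP: vf => k _ ->; rewrite ancK -rp ffunE inE //.
  rewrite inE -rp ffunE Gsym; apply: (implyP (forallP (hp v) _)); apply: ancH; by rewrite vf.
rewrite card_family_prod (bigID (mem (f @: setT))) /= big1 ?mul1n.
  by apply: eq_leq; apply: eq_bigr => v vf; rewrite /F (negbTE vf); apply: eq_card => y; rewrite !inE.
by move=> v vf; rewrite /F vf card1.
Qed.

Lemma prod_except (P : pred 'I_(s+t)) (i : 'I_(s+t)) (w : nat) (F : 'I_(s+t) -> nat) :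
  P i -> F i = 1 -> (forall k, P k -> k != i -> F k = w) ->
  \prod_(k | P k) F k = w ^ #|[set k | P k]|.-1.
Proof.
move=> Pi Fi Fk; rewrite (bigD1 i) //= Fi mul1n.
rewrite (eq_bigr (fun _ => w)); last by move=> k /andP [Pk ki]; apply: Fk.
rewrite prod_nat_const; congr (_ ^ _).
rewrite (cardsD1 i) inE Pi add1n /=; apply: eq_card => k; rewrite !inE andbC //.
Qed.

Lemma pair_count (i j : 'I_(s+t)) e1 e2 : i < s -> s <= j ->
  \sum_(psi | Khom psi) deg G (psi i) ^ e1 * deg G (psi j) ^ e2 <=
  \sum_a \sum_(b | G a b) deg G a ^ (e1 + t.-1) * deg G b ^ (e2 + s.-1).
Proof.
move=> is_ sj.
have kij : Kbip s i j by rewrite /Kbip is_ ltnNge sj.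
rewrite (partition_big (fun psi : {ffun 'I_(s+t) -> 'I_n} => (psi i, psi j)) (fun ab : 'I_n * 'I_n => G ab.1 ab.2)) /=; last first.
  by move=> psi /forallP /(_ i) /forallP /(_ j) /implyP; apply.
rewrite [X in _ <= X](pair_big_dep xpredT (fun a b => G a b)) /=.
apply: leq_sum => [[a b]] /= gab.
rewrite (eq_bigr (fun _ => deg G a ^ e1 * deg G b ^ e2)); last first.
  by move=> psi /andP [_ /eqP [-> ->]].
rewrite sum_nat_const !expnD mulnACA [X in _ <= X]mulnC; apply: leq_mul => //.
pose F k := if k == i then pred1 a else if k == j then pred1 b
            else if k < s then [pred y | G b y] else [pred y | G a y].
apply: leq_trans (_ : _ <= #|[set psi : {ffun 'I_(s+t) -> 'I_n} | [forall x, psi x \in F x]]|) _.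
  apply: subset_leq_card; apply/subsetP => psi; rewrite !inE => /andP [/forallP Kp /eqP [pi pj]].
  apply/forallP => k; rewrite /F; case: eqP => [->|ki]; first by rewrite inE pi.
  case: eqP => [->|kj]; first by rewrite inE pj.
  case: ifP => ks; rewrite inE.
    rewrite -pj Gsym; apply: (implyP (forallP (Kp k) j)); by rewrite /Kbip ks ltnNge sj.
  rewrite -pi; apply: (implyP (forallP (Kp i) k)); by rewrite /Kbip ks is_.
rewrite card_family_prod (bigID (fun k : 'I_(s+t) => k < s)) /= mulnC.
have ji : (j == i) = false by apply/negbTE; apply: contraTneq sj => ->; rewrite -ltnNge.
have F1 : forall k : 'I_(s+t), k < s -> k != i -> #|F k| = deg G b.
  move=> k ks ki; rewrite /F (negbTE ki) ks.
  have -> : (k == j) = false by apply/negbTE; apply: contraTneq ks => ->; rewrite -leqNgt.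
  by apply: eq_card => y; rewrite !inE.
have F2 : forall k : 'I_(s+t), ~~ (k < s) -> k != j -> #|F k| = deg G a.
  move=> k ks kj; rewrite /F (negbTE kj) (negbTE ks).
  have -> : (k == i) = false by apply/negbTE; apply: contraTneq ks => ->; rewrite is_.
  by apply: eq_card => y; rewrite !inE.
have Fi : #|F i| = 1 by rewrite /F eqxx card1.
have Fj : #|F j| = 1 by rewrite /F ji eqxx card1.
rewrite (@prod_except (fun k : 'I_(s+t) => k < s) i (deg G b) (fun k => #|F k|) is_ Fi F1).
rewrite (@prod_except (fun k : 'I_(s+t) => ~~ (k < s)) j (deg G a) (fun k => #|F k|) _ Fj F2); last by rewrite -leqNgt.
rewrite card_lt ?leq_addr // card_ge ?leq_addr // addKn mulnC.
by [].
Qed.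
End Upper.

Section RatPart.
Local Open Scope ring_scope.



Lemma eqle (x y : rat) : x = y -> (x <= y)%R. Proof. by move->. Qed.

Lemma amgm (I : finType) (A : {pred I}) (z : I -> rat) : (forall i, 0 <= z i) -> (0 < #|A|)%N ->
  \prod_(i in A) z i <= #|A|%:R^-1 * \sum_(i in A) z i ^+ #|A|.
Proof.
move=> z0 N0.
have [H2 _] := leif_AGM (A := A) (E := fun i => z i ^+ #|A|) (fun i _ => exprn_ge0 _ (z0 i)).
move: H2; set mu := _ / _ => H2.
rewrite prodrXl in H2.
rewrite mulrC; rewrite -(ler_pXn2r N0) //.
  by rewrite nnegrE; apply: prodr_ge0 => i _.
by rewrite nnegrE /mu divr_ge0 ?ler0n // sumr_ge0 // => i _; apply: exprn_ge0.
Qed.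

Lemma side_bound (J : finType) (h : nat) (B : {set 'I_h}) (anc : 'I_h -> J) (P : pred J) (i0 : J) :
  (forall v, v \in B -> P (anc v)) -> P i0 ->
  exists beta : J -> rat, [/\ forall i, 0 <= beta i, \sum_i beta i = 1,
     forall i, beta i != 0 -> P i &
     forall z : J -> rat, (forall i, 0 <= z i) ->
        \prod_(v in B) z (anc v) <= \sum_i beta i * z i ^+ #|B| ].
Proof.
move=> PB Pi0; case: (posnP #|B|) => [B0|Bpos].
  exists (fun i => (i == i0)%:R); split.
  - by move=> i; rewrite ler0n.
  - by rewrite (bigD1 i0) //= eqxx big1 ?addr0 // => i /negbTE ->.
  - by move=> i; case: (eqVneq i i0) => [-> //|_]; rewrite eqxx.
  move=> z _; rewrite (eq_bigl (fun=> false)); last by move=> v; rewrite (card0_eq B0).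
  rewrite big_pred0_eq B0 (bigD1 i0) //= eqxx mul1r expr0 big1 ?addr0 // => i /negbTE ->.
  by rewrite mul0r.
pose N := #|B|.
have part (F : 'I_h -> rat) : \sum_(v in B) F v = \sum_i \sum_(v in B | anc v == i) F v.
  by rewrite (partition_big anc xpredT).
exists (fun i => #|[set v in B | anc v == i]|%:R / N%:R); split.
- by move=> i; rewrite divr_ge0 ?ler0n.
- rewrite -mulr_suml -natr_sum.
  have -> : (\sum_i #|[set v in B | anc v == i]|)%N = N.
    rewrite /N -sum1_card (partition_big anc xpredT) //=; apply: eq_bigr => i _.
    by rewrite -sum1_card; apply: eq_bigl => v; rewrite inE.
  by rewrite mulfV // pnatr_eq0 -lt0n.
- move=> i; apply: contraR => nP; rewrite mulf_eq0; apply/orP; left.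
  rewrite pnatr_eq0 cards_eq0; apply/eqP/setP => v; rewrite !inE.
  by apply/negP => /andP [vB /eqP ai]; move: (PB v vB); rewrite ai (negbTE nP).
move=> z z0; have H := amgm (z := fun v => z (anc v)) (fun v => z0 _) Bpos.
apply: le_trans H _.
rewrite part mulr_sumr; apply: eqle; apply: eq_bigr => i _.
rewrite (eq_bigr (fun _ => z i ^+ #|B|)); last by move=> v /andP [_ /eqP ->].
rewrite sumr_const -mulr_natl.
have -> : #|[pred v in B | anc v == i]| = #|[set v in B | anc v == i]| by apply: eq_card => v; rewrite !inE.
rewrite /N; field; by rewrite pnatr_eq0 -lt0n.
Qed.

End RatPart.

Section UpperMain.
Variables (h n s t : nat) (H : rel 'I_h) (G : rel 'I_n) (f : {ffun 'I_(s+t) -> 'I_h})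
  (anc : 'I_h -> 'I_(s+t)) (col : pred 'I_h).
Hypothesis Gsym : symmetric G.
Hypothesis fK : forall i j, Kbip s i j -> H (f i) (f j).
Hypothesis ancK : forall k, anc (f k) = k.
Hypothesis ancH : forall v, v \notin f @: setT -> H v (f (anc v)).
Hypothesis s0 : 0 < s.
Hypothesis t0 : 0 < t.
Hypothesis ancA : forall v, v \notin f @: setT -> col v -> s <= anc v.
Hypothesis ancB : forall v, v \notin f @: setT -> ~~ col v -> anc v < s.

Definition Aset := [set v | (v \notin f @: setT) && col v].
Definition Bset := [set v | (v \notin f @: setT) && ~~ col v].

Lemma hom_upper_nat : #|[set phi | homb H G phi]| <=
  \sum_a \sum_(b | G a b) deg G a ^ (#|Bset| + t.-1) * deg G b ^ (#|Aset| + s.-1).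
Proof.
set S0 := (\sum_a _)%N.
rewrite -(ler_nat rat); apply: le_trans (_ : _ <= (\sum_(psi | Khom G psi) \prod_(v | v \notin f @: setT) deg G (psi (anc v)))%:R)%R _.
  by rewrite ler_nat; apply: hom_ext.
have i0P : 0 < s + t by rewrite addn_gt0 s0.
have j0P : s < s + t by rewrite -{1}(addn0 s) ltn_add2l.
have hB : forall v, v \in Bset -> anc v < s by move=> v; rewrite inE => /andP [] /ancB.
have hA : forall v, v \in Aset -> s <= anc v by move=> v; rewrite inE => /andP [] /ancA.
have [be [be0 be1 beP beB]] := side_bound (P := fun i : 'I_(s+t) => i < s)
    (i0 := Ordinal i0P) hB s0.
have [al [al0 al1 alP alB]] := side_bound (P := fun i : 'I_(s+t) => s <= i)
    (i0 := Ordinal j0P) hA (leqnn s).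
pose X (psi : {ffun 'I_(s+t) -> 'I_n}) (i : 'I_(s+t)) := ((deg G (psi i))%:R : rat)%R.
have X0 psi i : (0 <= X psi i)%R by rewrite ler0n.
rewrite natr_sum.
apply: (@le_trans _ _ (\sum_(psi | Khom G psi) ((\sum_i be i * X psi i ^+ #|Bset|) * (\sum_j al j * X psi j ^+ #|Aset|)))%R).
  apply: ler_sum => psi _; rewrite natr_prod (bigID col) /= mulrC.
  apply: ler_pM; try by apply: prodr_ge0 => v _; rewrite ler0n.
    rewrite (eq_bigl (fun v => v \in Bset)); last by move=> v; rewrite inE.
    exact: (beB (X psi) (X0 psi)).
  rewrite (eq_bigl (fun v => v \in Aset)); last by move=> v; rewrite inE.
  exact: (alB (X psi) (X0 psi)).
rewrite (eq_bigr (fun psi => \sum_i \sum_j (be i * al j) * (X psi i ^+ #|Bset| * X psi j ^+ #|Aset|)))%R; last first.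
  move=> psi _; rewrite mulr_suml; apply: eq_bigr => i _; rewrite mulr_sumr; apply: eq_bigr => j _.
  ring.
rewrite (exchange_big_dep xpredT) //=.
under eq_bigr => i _ do rewrite (exchange_big_dep xpredT) //=.
apply: (@le_trans _ _ (\sum_i \sum_j be i * al j * S0%:R)%R).
  apply: ler_sum => i _; apply: ler_sum => j _; rewrite -mulr_sumr.
  case: (eqVneq (be i) 0%R) => [->|bi]; first by rewrite !mul0r.
  case: (eqVneq (al j) 0%R) => [->|aj]; first by rewrite mulr0 !mul0r.
  apply: ler_wpM2l; first by rewrite mulr_ge0.
  have := pair_count Gsym #|Bset| #|Aset| (beP i bi) (alP j aj).
  rewrite -(ler_nat rat) natr_sum => /(le_trans _); apply; apply: eqle.
  apply: eq_big => psi; first by rewrite !andbT.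
  by move=> _; rewrite natrM !natrX.
apply: eqle.
under eq_bigr => i _ do rewrite -mulr_suml -mulr_sumr.
by rewrite -mulr_suml -mulr_suml be1 al1 !mul1r.
Qed.
End UpperMain.

Section Final.
Variables (s t h : nat) (H : rel 'I_h) (f : {ffun 'I_(s+t) -> 'I_h}) (c : 'I_h -> bool).
Hypothesis s0 : 0 < s.
Hypothesis t0 : 0 < t.
Hypothesis Hsym : symmetric H.
Hypothesis Hc : forall x y, H x y -> c x != c y.
Hypothesis fhom : inj_homb (@Kbip (s + t) s) H f.
Hypothesis dom : forall v : 'I_h, dist_le1 H (f @: setT) v.

Lemma i0P : 0 < s + t. Proof. by rewrite addn_gt0 s0. Qed.
Lemma j0P : s < s + t. Proof. by rewrite -{1}(addn0 s) ltn_add2l. Qed.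
Definition k0 : 'I_(s+t) := Ordinal i0P.
Definition j0 : 'I_(s+t) := Ordinal j0P.

Lemma finj : injective f.
Proof. by case/andP: fhom => /injectiveP. Qed.
Lemma fK : forall i j, Kbip s i j -> H (f i) (f j).
Proof. by case/andP: fhom => _ /forallP hf i j kij; apply: (implyP (forallP (hf i) j)). Qed.

Definition anc (v : 'I_h) : 'I_(s+t) :=
  if [pick k | f k == v] is Some k then k else
  if [pick k | H v (f k)] is Some k then k else k0.

Lemma ancK k : anc (f k) = k.
Proof. rewrite /anc; case: pickP => [k' /eqP /finj //|/(_ k)]; by rewrite eqxx. Qed.

Lemma ancH v : v \notin f @: setT -> H v (f (anc v)).
Proof.
move=> vn; rewrite /anc; case: pickP => [k /eqP e|_].
  by move: vn; rewrite -e imset_f.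
case: pickP => [k //|none]; case: (dom v) => [vi|[u /imsetP [k _ ->] hvu]].
  by move: vn; rewrite vi.
by have := none k; rewrite hvu.
Qed.

Definition g0 := c (f k0).
Lemma cS (k : 'I_(s+t)) : k < s -> c (f k) = g0.
Proof.
move=> ks; have h1 := Hc (fK (i := k) (j := j0) _); have h2 := Hc (fK (i := k0) (j := j0) _).
rewrite /Kbip /= ks ltnn in h1; rewrite /Kbip /= s0 ltnn in h2.
rewrite /g0; move: (h1 isT) (h2 isT); by case: (c (f k)); case: (c (f k0)); case: (c (f j0)).
Qed.
Lemma cT (k : 'I_(s+t)) : s <= k -> c (f k) != g0.
Proof.
move=> sk; have h1 := Hc (fK (i := k0) (j := k) _); rewrite /Kbip /= s0 ltnNge sk in h1.
by rewrite eq_sym; apply: h1.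
Qed.

Definition col v := c v == g0.
Lemma ancA v : v \notin f @: setT -> col v -> s <= anc v.
Proof.
move=> vn /eqP cv; have := Hc (ancH vn); rewrite cv; rewrite leqNgt; apply: contra => lt.
by rewrite cS.
Qed.
Lemma ancB v : v \notin f @: setT -> ~~ col v -> anc v < s.
Proof.
move=> vn cv; have := Hc (ancH vn); rewrite ltnNge; apply: contra => le.
move: cv (cT le); rewrite /col; by case: (c v); case: (c (f (anc v))); case: g0.
Qed.


Lemma cardA : #|[set v | c v == g0]| = s + #|Aset f col|.
Proof.
have -> : [set v | c v == g0] = f @: [set k : 'I_(s+t) | k < s] :|: Aset f col.
  apply/setP => v; rewrite !inE; apply/idP/orP.
    move=> cv; case: (boolP (v \in f @: setT)) => [/imsetP [k _ ev]|vn]; last by right; rewrite /col cv.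
    left; apply/imsetP; exists k => //; rewrite inE ltnNge; apply/negP => sk.
    by move: (cT sk); rewrite -ev cv.
  case=> [/imsetP [k]|]; first by rewrite inE => ks ->; rewrite cS.
  by case/andP.
rewrite -[LHS]addn0 -(cards0 'I_h).
have <- : f @: [set k : 'I_(s+t) | k < s] :&: Aset f col = set0.
  apply/setP => v; rewrite /Aset /Bset !inE; apply/negP => /andP [vi /andP [vn _]].
  by move: vn; rewrite (subsetP (imsetS f (subsetT [set k : 'I_(s+t) | k < s])) v vi).
rewrite cardsUI (card_imset _ finj); congr (_ + _); exact: card_lt (leq_addr t s).
Qed.

Lemma cardB : #|[set v | c v != g0]| = t + #|Bset f col|.
Proof.
have -> : [set v | c v != g0] = f @: [set k : 'I_(s+t) | ~~ (k < s)] :|: Bset f col.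
  apply/setP => v; rewrite !inE; apply/idP/orP.
    move=> cv; case: (boolP (v \in f @: setT)) => [/imsetP [k _ ev]|vn]; last by right; rewrite /col cv.
    left; apply/imsetP; exists k => //; rewrite inE; apply/negP => sk.
    by move: (cS sk); rewrite -ev; move/eqP; rewrite (negbTE cv).
  case=> [/imsetP [k]|]; first by rewrite inE -leqNgt => ks ->; rewrite cT.
  by case/andP.
rewrite -[LHS]addn0 -(cards0 'I_h).
have <- : f @: [set k : 'I_(s+t) | ~~ (k < s)] :&: Bset f col = set0.
  apply/setP => v; rewrite /Aset /Bset !inE; apply/negP => /andP [vi /andP [vn _]].
  by move: vn; rewrite (subsetP (imsetS f (subsetT [set k : 'I_(s+t) | ~~ (k < s)])) v vi).
rewrite cardsUI (card_imset _ finj); congr (_ + _); rewrite card_ge ?leq_addr //; exact: addKn.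
Qed.


Definition pp := #|[set v | c v == g0]|.
Definition qq := #|[set v | c v != g0]|.

Lemma homs_upper n (G : rel 'I_n) : symmetric G ->
  (forall a b u, G a b -> G b u -> G u a -> False) ->
  #|[set phi | homb H G phi]| <= \max_(m < n.+1) gbip n pp qq m.
Proof.
move=> Gsym Gtf.
apply: leq_trans (hom_upper_nat Gsym fK ancK ancH s0 t0 ancA ancB) _.
have -> : (#|Bset f col| + t.-1) = qq.-1 by rewrite /qq cardB; lia.
have -> : (#|Aset f col| + s.-1) = pp.-1 by rewrite /pp cardA; lia.
apply: edge_sum => //; [rewrite /pp cardA | rewrite /qq cardB]; lia.
Qed.

Lemma h0 : 0 < h.
Proof. by case: (f k0) => m mh; apply: leq_trans mh; rewrite ltnS. Qed.

Lemma Aut_pos : 0 < #|Aut H|.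
Proof.
rewrite card_gt0; apply/set0Pn; exists [ffun x => x]; rewrite inE; apply/andP; split.
  apply/andP; split; first by apply/injectiveP => x y; rewrite !ffunE.
  by apply/forallP => x; apply/forallP => y; rewrite !ffunE; apply/implyP.
apply/eqP; rewrite /Eimg -[RHS]imset_id; apply: eq_imset => [[x y]] /=; by rewrite !ffunE.
Qed.

Lemma ex_upper n : ex_K3 H n <= max_bip H n + h * h * n ^ h.-1.
Proof.
rewrite /ex_K3; apply/bigmax_leqP => g /andP [gg tf].
set G := graph_of g.
have Gsym : symmetric G.
  move=> x y; rewrite /G /graph_of; case/andP: gg => /forallP /(_ x) /forallP /(_ y) /eqP -> _ //.
have Gtf : forall a b u, G a b -> G b u -> G u a -> False.
  move=> a b u h1 h2 h3; move/negP: tf; apply; apply/existsP; exists a; apply/existsP; exists b.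
  by apply/existsP; exists u; apply/and3P.
have A0 := Aut_pos.
rewrite -(leq_pmul2r A0) mulnDl copies_aut.
apply: leq_trans (_ : _ <= #|[set phi | homb H G phi]|) _.
  by apply: subset_leq_card; apply/subsetP => phi; rewrite !inE => /andP [].
apply: leq_trans (homs_upper Gsym Gtf) _.
apply/bigmax_leqP => m _.
have mn : m <= n by rewrite -ltnS ltn_ord.
apply: leq_trans (hom_bip_lower mn g0 Hc h0) _.
apply: leq_trans (noninj H (@Kbip n m)) _.
rewrite -copies_aut; apply: leq_add; last by apply: leq_pmulr.
by rewrite leq_mul2r; apply/orP; right; apply: (leq_bigmax m).
Qed.

Lemma ex_lower n : max_bip H n <= ex_K3 H n.
Proof.
apply/bigmax_leqP => m _.
pose g : {ffun 'I_n * 'I_n -> bool} := [ffun p => @Kbip n m p.1 p.2].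
have -> : @Kbip n m = graph_of g.
  by apply: functional_extensionality => x; apply: functional_extensionality => y; rewrite /graph_of ffunE.
apply: (leq_bigmax_cond (F := fun g => copies H (graph_of g))).
apply/andP; split.
  apply/andP; split; apply/forallP => x; first (apply/forallP => y; rewrite !ffunE /Kbip /=).
    by case: (x < m); case: (y < m).
  by rewrite ffunE /Kbip /= eqxx.
apply/negP => /existsP [x] /existsP [y] /existsP [z]; rewrite /graph_of !ffunE /Kbip /=.
by case: (x < m); case: (y < m); case: (z < m).
Qed.

End Final.

Theorem mainTheorem2 (s t h : nat) (H : rel 'I_h) :
  1 <= s -> 1 <= t ->
  is_graph H -> bipartite H ->
  (exists f : {ffun 'I_(s + t) -> 'I_h},
      inj_homb (@Kbip (s + t) s) H f /\
      forall v : 'I_h, dist_le1 H (f @: setT) v) ->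
  forall eps : rat, (0 < eps)%R ->
  exists N : nat, forall n : nat, N <= n ->
    (`| ((ex_K3 H n)%:R - (max_bip H n)%:R : rat) | <= eps * (n ^ h)%:R)%R.
Proof.
move=> s0 t0 _ [c Hc] [f [fhom dom]] eps eps0.
have hpos : 0 < h by case: (f (Ordinal (leq_trans s0 (leq_addr t s)))) => m mh; apply: leq_trans mh.
set D := Num.bound (eps^-1)%R.
have hD : (eps^-1 < D%:R)%R by apply: archi_boundP; rewrite invr_ge0; apply: ltW.
have eD : (1 <= eps * D%:R)%R.
  rewrite -[X in (X <= _)%R](mulfV (lt0r_neq0 eps0)) (ler_pM2l eps0); exact: ltW.
exists (h * h * D) => n nN.
have up := ex_upper s0 t0 Hc fhom dom n.
have lo := ex_lower H n.
rewrite ger0_norm; last by rewrite subr_ge0 ler_nat.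
rewrite lerBlDl.
apply: le_trans (_ : _ <= (max_bip H n + h * h * n ^ h.-1)%:R)%R _; first by rewrite ler_nat.
rewrite natrD lerD2l.
have -> : n ^ h = n * n ^ h.-1 by rewrite -expnS prednK.
apply: (@le_trans _ _ (eps * (h * h * D * n ^ h.-1)%:R)%R).
  rewrite !natrM mulrA [X in (_ <= X)%R]mulrC -!mulrA.
  set K := (h%:R * (h%:R * (n ^ h.-1)%:R))%R.
  have -> : ((n ^ h.-1)%:R * (eps * (h%:R * (h%:R * D%:R))) = K * (eps * D%:R))%R by rewrite /K; ring.
  by apply: ler_peMr => //; rewrite /K !mulr_ge0 ?ler0n.
rewrite ler_pM2l // ler_nat leq_mul2r; apply/orP; right; exact: nN.
Qed.
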